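(* For every $m \ge 1$, the quotient $TW_{m+2}'/TW_{m+2}''$ is isomorphic to the free abelian group $\mathbb Z^{2m-1}$. In particular, $TW_{m+2}'$ is not perfect for any $m \ge 1$.
   Context: For $n \ge 2$, the twin group $TW_n$ is the group with generators $\tau_1,\dots,\tau_{n-1}$ and defining relations $\tau_i^2=1$ for all $i$, and $\tau_i\tau_j=\tau_j\tau_i$ whenever $|i-j|>1$. $G'$ denotes the commutator subgroup of a group $G$ and $G''=(G')'$. *)

(* Defs.v *)
(* The twin group TW_n is modelled by its presentation:
   elements are words in the generators tau_1..tau_{n-1} (letter i : 'I_(n-1)
   stands for tau_{i+1}), modulo the congruence generated by the defining
   relations. Since every generator is an involution, the free monoid on the
   generators modulo this congruence is exactly the group TW_n, and the
   inverse of a word is its reverse. *)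
From HB Require Import structures.
From mathcomp Require Import all_boot all_order all_algebra.
Set Implicit Arguments. Unset Strict Implicit. Unset Printing Implicit Defensive.
Import GRing.Theory.
Local Open Scope ring_scope.

Definition tw_word (n : nat) := seq 'I_n.-1.

Definition far (k : nat) (i j : 'I_k) : bool :=
  ((nat_of_ord i).+1 < j)%N || ((nat_of_ord j).+1 < i)%N.

Inductive tw_eq (n : nat) : tw_word n -> tw_word n -> Prop :=
| tw_refl u : tw_eq u u
| tw_sym u v : tw_eq u v -> tw_eq v u
| tw_trans u v w : tw_eq u v -> tw_eq v w -> tw_eq u w
| tw_sq (u v : tw_word n) (i : 'I_n.-1) : tw_eq (u ++ [:: i; i] ++ v) (u ++ v)
| tw_comm (u v : tw_word n) (i j : 'I_n.-1) :
    far i j -> tw_eq (u ++ [:: i; j] ++ v) (u ++ [:: j; i] ++ v).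

Definition tw_inv (n : nat) (u : tw_word n) : tw_word n := rev u.
Definition tw_commutator (n : nat) (a b : tw_word n) : tw_word n :=
  tw_inv a ++ tw_inv b ++ a ++ b.

Inductive tw_derived (n : nat) (H : tw_word n -> Prop) : tw_word n -> Prop :=
| der_gen a b : H a -> H b -> tw_derived H (tw_commutator a b)
| der_one : tw_derived H [::]
| der_mul u v : tw_derived H u -> tw_derived H v -> tw_derived H (u ++ v)
| der_inv u : tw_derived H u -> tw_derived H (tw_inv u)
| der_eq u v : tw_derived H u -> tw_eq u v -> tw_derived H v.

Definition TW' (n : nat) : tw_word n -> Prop := tw_derived (fun _ => True).
Definition TW'' (n : nat) : tw_word n -> Prop := tw_derived (@TW' n).

(* TW_n'/TW_n'' is isomorphic to Z^k: there is a homomorphism f from TW_n'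
   (well defined on group elements) onto Z^k (row vectors of integers) whose
   kernel is exactly TW_n''. *)
Definition TW_ab_iso_Zk (n k : nat) : Prop :=
  exists f : tw_word n -> 'rV[int]_k,
    [/\ (forall u v, TW' u -> tw_eq u v -> f u = f v),
        (forall u v, TW' u -> TW' v -> f (u ++ v) = f u + f v),
        (forall x : 'rV[int]_k, exists2 u, TW' u & f u = x)
      & (forall u, TW' u -> (f u = 0 <-> TW'' u))].

Definition TW'_perfect (n : nat) : Prop := forall u : tw_word n, TW' u -> TW'' u.

(* Main.v *)
Require Import Defs.
From mathcomp Require Import all_boot all_order all_algebra.
From mathcomp Require Import zify ring lra.
From Stdlib Require Import FunctionalExtensionality.
Set Implicit Arguments. Unset Strict Implicit. Unset Printing Implicit Defensive.
Import GRing.Theory.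

Lemma tw_congr n (a b u v : tw_word n) : tw_eq u v -> tw_eq (a ++ u ++ b) (a ++ v ++ b).
Proof.
elim=> {u v}.
- by move=> u; apply: tw_refl.
- by move=> u v _ H; apply: tw_sym.
- by move=> u v w _ H1 _ H2; apply: tw_trans H2.
- move=> u v i. rewrite -!catA !catA -(catA (a ++ u)) -catA.
  have := tw_sq (a ++ u) (v ++ b) i. by rewrite -!catA.
- move=> u v i j hf. have := tw_comm (a ++ u) (v ++ b) hf. by rewrite -!catA.
Qed.

Lemma tw_congrL n (a u v : tw_word n) : tw_eq u v -> tw_eq (a ++ u) (a ++ v).
Proof. by move=> h; have := tw_congr a [::] h; rewrite !cats0. Qed.

Lemma tw_congrR n (b u v : tw_word n) : tw_eq u v -> tw_eq (u ++ b) (v ++ b).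
Proof. by move=> h; have := tw_congr [::] b h. Qed.

Lemma tw_cat n (u u' v v' : tw_word n) : tw_eq u u' -> tw_eq v v' -> tw_eq (u ++ v) (u' ++ v').
Proof. move=> h1 h2; apply: tw_trans (tw_congrR _ h1) (tw_congrL _ h2). Qed.

Lemma tw_cancel n (u : tw_word n) : tw_eq (u ++ rev u) [::].
Proof.
elim: u => [|a u IH] /=; first exact: tw_refl.
rewrite rev_cons -cats1.
apply: tw_trans (_ : tw_eq (a :: [:: a]) [::]).
  have := tw_congr [:: a] [:: a] IH. by rewrite /= -!catA.
exact: (tw_sq [::] [::] a).
Qed.

Lemma tw_cancel' n (u : tw_word n) : tw_eq (rev u ++ u) [::].
Proof. by have := tw_cancel (rev u); rewrite revK. Qed.

Lemma tw_comm1 n (w : tw_word n) (i : 'I_n.-1) :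
  all (fun a => far a i) w -> tw_eq (w ++ [:: i]) (i :: w).
Proof.
elim: w => [|a w IH] /=; first by move=> _; apply: tw_refl.
case/andP=> ha hw.
apply: tw_trans (_ : tw_eq (a :: i :: w) _).
  exact: (tw_congrL [:: a] (IH hw)).
exact: (tw_comm [::] w ha).
Qed.

Lemma tw_commw n (w z : tw_word n) :
  all (fun i => all (fun a => far a i) w) z -> tw_eq (w ++ z) (z ++ w).
Proof.
elim: z => [|i z IH] /=; first by rewrite cats0; move=> _; apply: tw_refl.
case/andP=> hi hz.
rewrite -cat1s catA.
apply: tw_trans (tw_congrR z (tw_comm1 hi)) _.
exact: (tw_congrL [:: i] (IH hz)).
Qed.

Lemma tw_conj n (w z : tw_word n) :
  all (fun i => all (fun a => far a i) w) z -> tw_eq (w ++ z ++ rev w) z.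
Proof.
move=> h. rewrite catA.
apply: tw_trans (tw_congrR _ (tw_commw h)) _.
rewrite -catA. have := tw_congrL z (tw_cancel w). by rewrite cats0.
Qed.

Local Open Scope ring_scope.
Definition st := nat -> bool.
Definition flip (q : st) (i : nat) : st := fun j => q j (+) (j == i)%N.
Definition par k (q : st) (u : seq 'I_k) : st := foldl (fun q (a : 'I_k) => flip q a) q u.

Definition wt (p : nat) (q : st) (i : nat) (c : nat) : int :=
  let s : int := if q i then -1 else 1 in
  let L := (0 < i)%N && q i.-1 in let R := q i.+1 in
  if (c < p)%N then (if (i == c.+1)%N && L then s else 0) + (if (i == c)%N && (L && R) then s else 0)
  else (if (i == c - p + 1)%N && (L && R) then - s else 0).

Fixpoint F p k (q : st) (u : seq 'I_k) (c : nat) : int :=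
  match u with [::] => 0 | a :: u' => wt p q a c + F p (flip q a) u' c end.

Lemma par_cat k q (u v : seq 'I_k) : par q (u ++ v) = par (par q u) v.
Proof. exact: foldl_cat. Qed.

Lemma par_cons k q (a : 'I_k) u : par q (a :: u) = par (flip q a) u.
Proof. by []. Qed.

Lemma F_cat p k q (u v : seq 'I_k) c : F p q (u ++ v) c = F p q u c + F p (par q u) v c.
Proof. elim: u q => [|a u IH] q /=; first by rewrite add0r. by rewrite IH addrA. Qed.

Lemma flipK q i : flip (flip q i) i = q.
Proof. apply: functional_extensionality => j; rewrite /flip -addbA addbb addbF. by []. Qed.

Lemma flipC q i j : flip (flip q i) j = flip (flip q j) i.
Proof. apply: functional_extensionality => x; rewrite /flip -!addbA. by rewrite (addbC (x == i)%N). Qed.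

Lemma wt_self p q i c : wt p (flip q i) i c = - wt p q i c.
Proof.
rewrite /wt /flip eqxx.
have -> : (i.+1 == i)%N = false by lia.
have -> : ((0 < i)%N && (q i.-1 (+) (i.-1 == i)%N)) = ((0 < i)%N && q i.-1).
  case: i => [|i] //=. by rewrite (_ : (i == i.+1)%N = false) ?addbF //; lia.
rewrite !addbF.
have -> : (if q i (+) true then -1 else 1 : int) = - (if q i then -1 else 1) by case: (q i).
case: (c < p)%N => /=; [case: [&& i == c.+1, _ & _]; case: [&& i == c, _ & _] | case: [&& _ , _ & _]];
  by rewrite ?oppr0 ?opprD ?add0r ?addr0.
Qed.

Lemma wt_far p q i j c : (i != j)%N -> (i != j.+1)%N -> (j != i.+1)%N ->
  wt p (flip q j) i c = wt p q i c.
Proof.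
move=> h1 h2 h3; rewrite /wt /flip.
rewrite (negbTE h1) addbF.
have -> : (i.+1 == j)%N = false by apply/negP => /eqP E; rewrite E eqxx in h3.
rewrite addbF.
case: i h1 h2 h3 => [|i] //= h1 h2 h3.
have -> : (i == j)%N = false by apply/negP => /eqP E; rewrite E eqxx in h2.
by rewrite addbF.
Qed.

Lemma F_inv p n (u v : tw_word n) : tw_eq u v ->
  (forall q c, F p q u c = F p q v c) /\ (forall q, par q u = par q v).
Proof.
elim=> {u v}.
- by [].
- by move=> u v _ [h1 h2]; split=> *; rewrite ?h1 ?h2.
- by move=> u v w _ [h1 h2] _ [h3 h4]; split=> *; rewrite ?h1 ?h2 ?h3 ?h4.
- move=> u v i; split=> [q c|q].
    rewrite !F_cat /= wt_self flipK.
    by rewrite addr0 addrN add0r.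
  by rewrite !par_cat /= flipK.
- move=> u v i j hf; split=> [q c|q].
    rewrite !F_cat /= flipC.
    move: hf; rewrite /far => hf.
    rewrite (wt_far _ _ (i:=j) (j:=i)); try lia. rewrite (wt_far _ _ (i:=i) (j:=j)); try lia.
  by rewrite !par_cat /= flipC.
Qed.

Local Close Scope ring_scope.

Local Open Scope ring_scope.

Definition cntl k (j : nat) (u : seq 'I_k) := count (fun a : 'I_k => nat_of_ord a == j) u.

Lemma par_val k q (u : seq 'I_k) j : par q u j = q j (+) odd (cntl j u).
Proof.
elim: u q => [|a u IH] q /=; first by rewrite addbF.
rewrite IH /flip oddD -addbA eq_sym. by case: (a == j :> nat).
Qed.

Definition even_w k (u : seq 'I_k) := forall j, ~~ odd (cntl j u).

Lemma tw_eq_odd n (u v : tw_word n) : tw_eq u v -> forall j, odd (cntl j u) = odd (cntl j v).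
Proof.
elim=> {u v}.
- by [].
- by move=> u v _ h j; rewrite h.
- by move=> u v w _ h1 _ h2 j; rewrite h1 h2.
- move=> u v i j; rewrite /cntl !count_cat /= !oddD.
  by case: (odd (i == j :> nat)); case: (odd (count _ u)); case: (odd (count _ v)).
- move=> u v i i' _ j; rewrite /cntl !count_cat /= !oddD.
  by case: (odd (i == j :> nat)); case: (odd (i' == j :> nat)); case: (odd (count _ u)); case: (odd (count _ v)).
Qed.

Lemma cntl_rev k j (u : seq 'I_k) : cntl j (rev u) = cntl j u.
Proof. exact: count_rev. Qed.

Lemma derived_even n (H : tw_word n -> Prop) u : tw_derived H u -> even_w u.
Proof.
elim=> {u}.
- move=> a b _ _ j; rewrite /tw_commutator /tw_inv /cntl !count_cat !count_rev.
  by rewrite !oddD; case: (odd _); case: (odd _).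
- by move=> j.
- by move=> u v _ h1 _ h2 j; rewrite /cntl count_cat oddD; move: (h1 j) (h2 j) => /negbTE -> /negbTE ->.
- by move=> u _ h j; rewrite /tw_inv cntl_rev.
- by move=> u v _ h e j; rewrite -(tw_eq_odd e).
Qed.

Definition q0 : st := fun _ => false.

Lemma par0 k (u : seq 'I_k) : even_w u -> par q0 u = q0.
Proof. move=> h; apply: functional_extensionality => j. by rewrite par_val /q0 (negbTE (h j)). Qed.

Definition f0 p k (u : seq 'I_k) c := F p q0 u c.

Lemma f_add p k (u v : seq 'I_k) c : even_w u -> f0 p (u ++ v) c = f0 p u c + f0 p v c.
Proof. by move=> h; rewrite /f0 F_cat par0. Qed.

Lemma f_inv p n (u v : tw_word n) c : tw_eq u v -> f0 p u c = f0 p v c.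
Proof. by move=> e; rewrite /f0 (F_inv p e).1. Qed.

Lemma even_rev k (u : seq 'I_k) : even_w u -> even_w (rev u).
Proof. by move=> h j; rewrite cntl_rev. Qed.

Lemma f_rev p n (u : tw_word n) c : even_w u -> f0 p (rev u) c = - f0 p u c.
Proof.
move=> h. have := f_inv p c (tw_cancel' u). rewrite f_add /f0 /=.
  by move/eqP; rewrite addr_eq0 => /eqP. exact: even_rev.
Qed.

Lemma even_cat k (u v : seq 'I_k) : even_w u -> even_w v -> even_w (u ++ v).
Proof. by move=> h1 h2 j; rewrite /cntl count_cat oddD; move: (h1 j) (h2 j) => /negbTE -> /negbTE ->. Qed.

Lemma f_TW'' p n (u : tw_word n) c : TW'' u -> f0 p u c = 0.
Proof.
elim=> {u}.
- move=> a b ha hb. have ea := derived_even ha. have eb := derived_even hb.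
  have er := even_rev ea; have er' := even_rev eb.
  rewrite /tw_commutator /tw_inv f_add // f_add // f_add // (f_rev p c ea) (f_rev p c eb).
  lia.
- by [].
- by move=> u v hu h1 _ h2; rewrite f_add ?h1 ?h2 ?addr0 //; apply: derived_even hu.
- by move=> u hu h; rewrite /tw_inv f_rev ?h ?oppr0 //; apply: derived_even hu.
- by move=> u v _ h e; rewrite -(f_inv p c e).
Qed.

Local Close Scope ring_scope.

Local Open Scope ring_scope.

Definition o p (j : nat) : 'I_p.+1 := inord j.
Definition xw p k : seq 'I_p.+1 := [:: o p k; o p k.+1; o p k; o p k.+1].
Definition yw p k : seq 'I_p.+1 := [:: o p k.-1; o p k; o p k.+1; o p k; o p k.+1; o p k.-1].
Definition gen p c : seq 'I_p.+1 := if (c < p)%N then xw p c else yw p (c - p + 1).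

Lemma oK p j : (j <= p)%N -> nat_of_ord (o p j) = j.
Proof. by move=> h; rewrite /o inordK. Qed.

Ltac bsplit := repeat match goal with
 | |- context [(?a == ?b)%N] => case: (@eqP nat a b) => ?; try subst; try (exfalso; lia)
 | |- context [(?a < ?b)%N] => case: (ltnP a b) => ?; try (exfalso; lia)
 end.

Lemma f_xw p k c : (k < p)%N -> f0 p (xw p k) c = (k == c)%:Z.
Proof.
move=> hk. rewrite /f0 /xw /= /wt /flip /q0 !oK; try lia.
bsplit; simpl; try lia.
Qed.

Lemma f_yw p k c : (0 < k)%N -> (k < p)%N -> f0 p (yw p k) c = ((k + p - 1)%N == c)%:Z.
Proof.
move=> hk0 hk. rewrite /f0 /yw /= /wt /flip /q0 !oK; try lia.
case: (ltnP c p) => hc /=; bsplit; simpl; try lia.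
Qed.

Lemma f_gen p c' c : (c' < 2 * p - 1)%N -> f0 p (gen p c') c = (c' == c)%:Z.
Proof.
move=> hc; rewrite /gen; case: ifP => h.
  by rewrite f_xw.
rewrite f_yw; lia.
Qed.

Local Close Scope ring_scope.

Local Open Scope ring_scope.

Lemma sq_at n (u v : tw_word n) i (w1 w2 : tw_word n) :
  w1 = u ++ [:: i; i] ++ v -> w2 = u ++ v -> tw_eq w1 w2.
Proof. by move=> -> ->; apply: tw_sq. Qed.

Lemma gen_TW' p c : @TW' p.+2 (gen p c).
Proof.
rewrite /gen; case: ifP => _.
  exact: (@der_gen p.+2 _ [:: o p c] [:: o p c.+1] I I).
set k := (c - p + 1)%N.
apply: (der_eq (@der_gen p.+2 _ [:: o p k.-1; o p k; o p k.-1] [:: o p k.-1; o p k.+1; o p k.-1] I I)).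
rewrite /tw_commutator /tw_inv /=.
set a := o p k.-1; set b := o p k; set d := o p k.+1.
apply: (@tw_trans p.+2 _ [:: a; b; d; a; a; b; a; a; d; a]).
  exact: (sq_at (n:=p.+2) (u:=[:: a; b]) (v:=[:: d; a; a; b; a; a; d; a]) (i:=a) erefl erefl).
apply: (@tw_trans p.+2 _ [:: a; b; d; b; a; a; d; a]).
  exact: (sq_at (n:=p.+2) (u:=[:: a; b; d]) (v:=[:: b; a; a; d; a]) (i:=a) erefl erefl).
exact: (sq_at (n:=p.+2) (u:=[:: a; b; d; b]) (v:=[:: d; a]) (i:=a) erefl erefl).
Qed.

Definition ge p (e : bool * nat) : seq 'I_p.+1 := if e.1 then rev (gen p e.2) else gen p e.2.
Definition expand p (s : seq (bool * nat)) : seq 'I_p.+1 := flatten (map (ge p) s).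

Lemma ge_TW' p e : @TW' p.+2 (ge p e).
Proof. rewrite /ge; case: ifP => _; last exact: gen_TW'. exact: (der_inv (gen_TW' p e.2)). Qed.

Lemma expand_TW' p s : @TW' p.+2 (expand p s).
Proof.
elim: s => [|e s IH] /=; first exact: der_one.
exact: (der_mul (ge_TW' p e) IH).
Qed.

Lemma expand_cat p s1 s2 : expand p (s1 ++ s2) = expand p s1 ++ expand p s2.
Proof. by rewrite /expand map_cat flatten_cat. Qed.

Definition sgn (b : bool) : int := if b then -1 else 1.
Fixpoint cntz (s : seq (bool * nat)) (x : nat) : int :=
  match s with [::] => 0 | e :: s' => (if (e.2 == x)%N then sgn e.1 else 0) + cntz s' x end.

Lemma cntz_cat s1 s2 x : cntz (s1 ++ s2) x = cntz s1 x + cntz s2 x.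
Proof. elim: s1 => [|e s IH] /=; first by rewrite add0r. by rewrite IH addrA. Qed.

Lemma cntz_sign b c s : (~~ b, c) \notin s ->
  if b then cntz s c <= 0 else 0 <= cntz s c.
Proof.
elim: s => [|[b' c'] s IH] /=; first by case: b.
rewrite in_cons negb_or => /andP [hne /IH] {}IH.
case: (c' =P c) => [E|_]; last by rewrite add0r.
subst c'. have hb : b' = b.
  by move: hne IH; case: b; case: b' => //=; rewrite eqxx.
subst b'; move: IH hne; case: b => /= ?; lia.
Qed.

Lemma f_expand p s c : all (fun e => e.2 < 2 * p - 1)%N s -> f0 p (expand p s) c = cntz s c.
Proof.
elim: s => [|[b c'] s IH] //= /andP [hc hs].
rewrite f_add; last by apply: derived_even (ge_TW' p (b, c')).
rewrite IH //; congr (_ + _).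
rewrite /ge /=; case: b => /=.
  rewrite (f_rev p c (derived_even (gen_TW' p c'))) f_gen //.
  by case: (c' == c)%N.
by rewrite f_gen //; case: (c' == c)%N.
Qed.

Lemma cnt0 p n : forall s, (size s <= n)%N -> (forall c, cntz s c = 0) ->
  @TW'' p.+2 (expand p s).
Proof.
elim: n => [|n IH] [|[b c] s] //=; try by move=> *; apply: der_one.
move=> hs h0.
have hin : (~~ b, c) \in s.
  apply/negPn/negP => /cntz_sign.
  have := h0 c; rewrite /= eqxx; move: h0; case: b => /= _ ? ?; lia.
case/splitPr: hin hs h0 => s1 s2 hs h0.
set g := ge p (b, c).
have eg : ge p (~~ b, c) = rev g by rewrite /g /ge; case: (b) => /=; rewrite ?revK.
set E1 := expand p s1. set E2 := expand p s2.
have -> : expand p ((b, c) :: s1 ++ (~~ b, c) :: s2) = g ++ E1 ++ rev g ++ E2.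
  by rewrite /E1 /E2 /expand /= map_cat flatten_cat /= -/(ge p (~~ b, c)) eg.
have H1 : @TW'' p.+2 (expand p (s1 ++ s2)).
  apply: IH.
    by move: hs; rewrite !size_cat /=; lia.
  move=> x; have := h0 x; rewrite /= !cntz_cat /= /g.
  case: (c == x)%N; rewrite ?add0r //; case: (b) => /=; lia.
have Hc : @TW'' p.+2 (tw_commutator (n:=p.+2) (rev g) (rev E1)).
  apply: der_gen.
    exact: (der_inv (ge_TW' p (b, c))).
  exact: (der_inv (expand_TW' p s1)).
apply: der_eq (der_mul Hc H1) _.
rewrite /tw_commutator /tw_inv !revK expand_cat -/E1 -/E2 -!catA.
have := tw_congr (n:=p.+2) (g ++ E1 ++ rev g) E2 (tw_cancel' (n:=p.+2) E1). by rewrite -!catA.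
Qed.

Local Close Scope ring_scope.

Definition farN (a b : nat) := (a.+1 < b) || (b.+1 < a).

Fixpoint fcan (x : nat) (l : seq nat) : option (seq nat) :=
  match l with
  | [::] => None
  | y :: l' => if y == x then Some l' else
      if farN x y then (if fcan x l' is Some r then Some (y :: r) else None) else None
  end.

Fixpoint red1 (u : seq nat) : option (seq nat) :=
  match u with
  | [::] => None
  | x :: u' => if fcan x u' is Some r then Some r else
      (if red1 u' is Some r then Some (x :: r) else None)
  end.

Fixpoint redn (n : nat) (u : seq nat) : seq nat :=
  match n with 0 => u | n.+1 => if red1 u is Some r then redn n r else u end.

Definition phi p base (d : nat) : 'I_p.+1 := o p (base + d).

Lemma phi_far p base M a b : base + M <= p -> a <= M -> b <= M -> farN a b ->
  far (phi p base a) (phi p base b).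
Proof. move=> h ha hb; rewrite /far /farN /phi !oK; lia. Qed.

Lemma fcan_sound p base M x l r : base + M <= p -> all (fun d => d <= M) (x :: l) ->
  fcan x l = Some r ->
  tw_eq (n:=p.+2) (map (phi p base) (x :: l)) (map (phi p base) r) /\ all (fun d => d <= M) r.
Proof.
move=> hb; elim: l r => [|y l IH] r //=.
case/and3P=> hx hy hl.
case: eqP => [-> [<-]|_].
  split; last by [].
  exact: (tw_sq (n:=p.+2) [::] (map (phi p base) l) (phi p base x)).
case: ifP => // hf; case e: (fcan x l) => [r'|] // [<-].
have [h1 h2] := IH r' (introT andP (conj hx hl)) e.
split; last by rewrite /= hy.
apply: (@tw_trans p.+2 _ (phi p base y :: phi p base x :: map (phi p base) l)).
  exact: (tw_comm (n:=p.+2) [::] _ (phi_far hb hx hy hf)).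
exact: (tw_congrL (n:=p.+2) [:: phi p base y] h1).
Qed.

Lemma red1_sound p base M u r : base + M <= p -> all (fun d => d <= M) u ->
  red1 u = Some r ->
  tw_eq (n:=p.+2) (map (phi p base) u) (map (phi p base) r) /\ all (fun d => d <= M) r.
Proof.
move=> hb; elim: u r => [|x u IH] r //= /andP [hx hu].
case e: (fcan x u) => [r'|].
  by move=> [<-]; apply: (fcan_sound hb _ e); rewrite /= hx.
case e2: (red1 u) => [r'|] // [<-].
have [h1 h2] := IH r' hu e2.
split; last by rewrite /= hx.
exact: (tw_congrL (n:=p.+2) [:: phi p base x] h1).
Qed.

Lemma redn_sound p base M n u : base + M <= p -> all (fun d => d <= M) u ->
  tw_eq (n:=p.+2) (map (phi p base) u) (map (phi p base) (redn n u)).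
Proof.
move=> hb; elim: n u => [|n IH] u hu /=; first exact: tw_refl.
case e: (red1 u) => [r|]; last exact: tw_refl.
have [h1 h2] := red1_sound hb hu e.
exact: tw_trans h1 (IH r h2).
Qed.

Lemma check_eq p base M (u v : seq nat) : base + M <= p ->
  all (fun d => d <= M) (u ++ rev v) -> redn (size (u ++ rev v)) (u ++ rev v) = [::] ->
  tw_eq (n:=p.+2) (map (phi p base) u) (map (phi p base) v).
Proof.
move=> hb ha hr.
have h := redn_sound (size (u ++ rev v)) hb ha; rewrite hr /= map_cat map_rev in h.
apply: (@tw_trans p.+2 _ (map (phi p base) u ++ rev (map (phi p base) v) ++ map (phi p base) v)).
  have := tw_congrL (n:=p.+2) (map (phi p base) u) (tw_sym (tw_cancel' (n:=p.+2) (map (phi p base) v))).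
  by rewrite cats0.
rewrite catA.
exact: (tw_congrR (n:=p.+2) (map (phi p base) v) h).
Qed.


Ltac chk b M u v := have := check_eq (base:=b) (M:=M) (u:=u) (v:=v) _ erefl erefl;
  rewrite /phi /= ?addn0 ?addn1 ?addn2 ?addn3; apply; lia.

Lemma tabX3 p k : k + 1 <= p -> tw_eq (n:=p.+2) ([:: o p k] ++ xw p k ++ [:: o p k]) (rev (xw p k)).
Proof. move=> h; chk k 1 [:: 0; 0; 1; 0; 1; 0] [:: 1; 0; 1; 0]. Qed.

Lemma tabX4 p k : k + 1 <= p -> tw_eq (n:=p.+2) ([:: o p k.+1] ++ xw p k ++ [:: o p k.+1]) (rev (xw p k)).
Proof. move=> h; chk k 1 [:: 1; 0; 1; 0; 1; 1] [:: 1; 0; 1; 0]. Qed.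

Lemma tabX5 p k : k + 2 <= p -> tw_eq (n:=p.+2) ([:: o p k.+2] ++ xw p k ++ [:: o p k.+2])
  (rev (yw p k.+1) ++ xw p k ++ xw p k.+1).
Proof. move=> h; chk k 2 [:: 2; 0; 1; 0; 1; 2] [:: 0; 2; 1; 2; 1; 0; 0; 1; 0; 1; 1; 2; 1; 2]. Qed.

Lemma tabY2 p k : k + 2 <= p -> tw_eq (n:=p.+2) ([:: o p k] ++ yw p k.+1 ++ [:: o p k]) (xw p k.+1).
Proof. move=> h; chk k 2 [:: 0; 0; 1; 2; 1; 2; 0; 0] [:: 1; 2; 1; 2]. Qed.

Lemma tabY3 p k : k + 2 <= p -> tw_eq (n:=p.+2) ([:: o p k.+1] ++ yw p k.+1 ++ [:: o p k.+1])
  (rev (xw p k) ++ rev (yw p k.+1) ++ xw p k).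
Proof. move=> h; chk k 2 [:: 1; 0; 1; 2; 1; 2; 0; 1] [:: 1; 0; 1; 0; 0; 2; 1; 2; 1; 0; 0; 1; 0; 1]. Qed.

Lemma tabY4 p k : k + 2 <= p -> tw_eq (n:=p.+2) ([:: o p k.+2] ++ yw p k.+1 ++ [:: o p k.+2])
  (rev (yw p k.+1)).
Proof. move=> h; chk k 2 [:: 2; 0; 1; 2; 1; 2; 0; 2] [:: 0; 2; 1; 2; 1; 0]. Qed.

Lemma tabY5 p k : k + 3 <= p -> tw_eq (n:=p.+2) ([:: o p k.+3] ++ yw p k.+1 ++ [:: o p k.+3])
  (xw p k ++ rev (yw p k.+2) ++ rev (xw p k) ++ yw p k.+1 ++ xw p k.+2).
Proof.
move=> h; chk k 3 [:: 3; 0; 1; 2; 1; 2; 0; 3]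
  [:: 0; 1; 0; 1; 1; 3; 2; 3; 2; 1; 1; 0; 1; 0; 0; 1; 2; 1; 2; 0; 2; 3; 2; 3].
Qed.

Lemma tabY6 p k : k + 3 <= p -> tw_eq (n:=p.+2) ([:: o p k] ++ yw p k.+2 ++ [:: o p k])
  (xw p k ++ yw p k.+2 ++ rev (xw p k)).
Proof.
move=> h; chk k 3 [:: 0; 1; 2; 3; 2; 3; 1; 0] [:: 0; 1; 0; 1; 1; 2; 3; 2; 3; 1; 1; 0; 1; 0].
Qed.


Definition vld p (s : seq (bool * nat)) := all (fun e => e.2 < 2 * p - 1) s.
Definition SS p (u : seq 'I_p.+1) := exists s, vld p s /\ tw_eq (n:=p.+2) u (expand p s).
Arguments SS : clear implicits.

Lemma gen_x p c : c < p -> gen p c = xw p c.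
Proof. by rewrite /gen => ->. Qed.

Lemma gen_y p k : 0 < k -> k < p -> gen p (k + p - 1) = yw p k.
Proof.
move=> h1 h2; rewrite /gen; have -> : (k + p - 1 < p) = false by lia.
by have -> : k + p - 1 - p + 1 = k by lia.
Qed.

Ltac vldt := rewrite /vld /=; repeat (apply/andP; split); try done; try lia.

Lemma table p (j : 'I_p.+1) c : c < 2 * p - 1 -> SS p ([:: j] ++ gen p c ++ [:: j]).
Proof.
move=> hc2.
rewrite -[j]inord_val -/(o p _).
have hJ : nat_of_ord j <= p by rewrite -ltnS ltn_ord.
move: (nat_of_ord j) hJ => J hJ.
case: (ltnP c p) => hc.
- rewrite gen_x //.
  have [hf|hnf] := boolP ((J + 2 <= c) || (c + 3 <= J)).
    exists [:: (false, c)]; split; first by vldt.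
    rewrite /expand /ge /= cats0 gen_x //.
    have := tw_conj (n:=p.+2) (w:=[:: o p J]) (z:=xw p c); rewrite /=; apply.
    rewrite /= /far !oK; lia.
  have [e|[e|[e|e]]] : J.+1 = c \/ J = c \/ J = c.+1 \/ J = c.+2 by lia.
  + exists [:: (false, c + p - 1)]; split; first by vldt.
    rewrite /expand /ge /= cats0 gen_y; try lia. rewrite -e; exact: tw_refl.
  + exists [:: (true, c)]; split; first by vldt.
    rewrite /expand /ge /= cats0 gen_x // e; have := tabX3 (p:=p); rewrite /=; apply; lia.
  + exists [:: (true, c)]; split; first by vldt.
    rewrite /expand /ge /= cats0 gen_x // e; have := tabX4 (p:=p); rewrite /=; apply; lia.
  + exists [:: (true, c.+1 + p - 1); (false, c); (false, c.+1)]; split; first by vldt.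
    rewrite /expand /ge /= cats0 gen_y; try lia. rewrite !gen_x; try lia.
    rewrite e; have := tabX5 (p:=p); rewrite /=; apply; lia.
- set k := c - p + 1.
  have ec : c = k + p - 1 by rewrite /k; lia.
  have hk1 : 0 < k by rewrite /k; lia.
  have hk2 : k < p by rewrite /k; lia.
  rewrite ec gen_y //.
  have [hf|hnf] := boolP ((J + 3 <= k) || (k + 3 <= J)).
    exists [:: (false, k + p - 1)]; split; first by vldt.
    rewrite /expand /ge /= cats0 gen_y //.
    have := tw_conj (n:=p.+2) (w:=[:: o p J]) (z:=yw p k); rewrite /=; apply.
    rewrite /= /far !oK; lia.
  move: k hk1 hk2 {ec} hnf => [|k] // _ hk2 hnf.
  have [e|[e|[e|[e|e]]]] : J.+2 = k.+1 \/ J.+1 = k.+1 \/ J = k.+1 \/ J = k.+2 \/ J = k.+3 by lia.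
  + move: k e hk2 hnf => [|k] //= [e] hk2 hnf. rewrite -e.
    exists [:: (false, J); (false, J.+2 + p - 1); (true, J)]; split; first by vldt.
    rewrite /expand /ge /= cats0 gen_y; try lia. rewrite !gen_x; try lia.
    have := tabY6 (p:=p); rewrite /=; apply; lia.
  + case: e => e; rewrite -e.
    exists [:: (false, J.+1)]; split; first by vldt.
    rewrite /expand /ge /= cats0 gen_x; try lia.
    have := tabY2 (p:=p); rewrite /=; apply; lia.
  + rewrite e.
    exists [:: (true, k); (true, k.+1 + p - 1); (false, k)]; split; first by vldt.
    rewrite /expand /ge /= cats0 gen_y; try lia. rewrite !gen_x; try lia.
    have := tabY3 (p:=p); rewrite /=; apply; lia.
  + rewrite e.
    exists [:: (true, k.+1 + p - 1)]; split; first by vldt.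
    rewrite /expand /ge /= cats0 gen_y; try lia.
    have := tabY4 (p:=p); rewrite /=; apply; lia.
  + rewrite e.
    exists [:: (false, k); (true, k.+2 + p - 1); (true, k); (false, k.+1 + p - 1); (false, k.+2)].
    split; first by vldt.
    rewrite /expand /ge /= cats0 !gen_y; try lia. rewrite !gen_x; try lia.
    have := tabY5 (p:=p); rewrite /=; apply; lia.
Qed.


Lemma SS_nil p : SS p [::].
Proof. by exists [::]; split=> //; apply: tw_refl. Qed.

Lemma SS_cat p u v : SS p u -> SS p v -> SS p (u ++ v).
Proof.
move=> [s1 [h1 e1]] [s2 [h2 e2]]; exists (s1 ++ s2); split.
  by move: h1 h2; rewrite /vld all_cat => -> ->.
by rewrite expand_cat; apply: tw_cat.
Qed.

Lemma SS_eq p u v : tw_eq (n:=p.+2) u v -> SS p u -> SS p v.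
Proof. move=> e [s [h e']]; exists s; split=> //; exact: tw_trans (tw_sym e) e'. Qed.

Lemma tw_rev n (u v : tw_word n) : tw_eq u v -> tw_eq (rev u) (rev v).
Proof.
elim=> {u v}.
- by move=> u; apply: tw_refl.
- by move=> u v _ h; apply: tw_sym.
- by move=> u v w _ h1 _ h2; apply: tw_trans h2.
- move=> u v i; rewrite !rev_cat /= -catA. exact: tw_sq.
- move=> u v i j h; rewrite !rev_cat /= -!catA. apply: tw_comm.
  by move: h; rewrite /far orbC.
Qed.

Definition invs (s : seq (bool * nat)) := rev (map (fun e => (~~ e.1, e.2)) s).

Lemma expand_invs p s : expand p (invs s) = rev (expand p s).
Proof.
elim: s => [|[b c] s IH] //=.
rewrite /invs map_cons rev_cons -cats1 expand_cat -/(invs s) IH.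
rewrite /expand /= cats0 rev_cat -/(expand p s) /ge /=.
by case: b; rewrite ?revK.
Qed.

Lemma SS_rev p u : SS p u -> SS p (rev u).
Proof.
move=> [s [h e]]; exists (invs s); split.
  by rewrite /vld /invs all_rev all_map; apply: sub_all h => e'.
rewrite expand_invs; exact: (tw_rev (n:=p.+2) e).
Qed.

Lemma SS_conj_exp p (a : 'I_p.+1) s : vld p s -> SS p ([:: a] ++ expand p s ++ [:: a]).
Proof.
elim: s => [|[b c] s IH] /=.
  move=> _; apply: (SS_eq (u:=[::])); last exact: SS_nil.
  exact: tw_sym (tw_sq (n:=p.+2) [::] [::] a).
case/andP=> hc hs.
have H1 : SS p ([:: a] ++ ge p (b, c) ++ [:: a]).
  rewrite /ge /=; case: b.
    have := SS_rev (table a hc). by rewrite !rev_cat.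
  exact: (table a hc).
apply: SS_eq (SS_cat H1 (IH hs)).
have := tw_congr (n:=p.+2) ([:: a] ++ ge p (b, c)) (expand p s ++ [:: a]) (tw_sq (n:=p.+2) [::] [::] a).
by rewrite /= -!catA.
Qed.

Lemma SS_conj1 p (a : 'I_p.+1) u : SS p u -> SS p ([:: a] ++ u ++ [:: a]).
Proof.
move=> [s [h e]]. apply: SS_eq (SS_conj_exp a h).
exact: (tw_congr (n:=p.+2) [:: a] [:: a] (tw_sym e)).
Qed.

Lemma SS_conjw p (w u : seq 'I_p.+1) : SS p u -> SS p (w ++ u ++ rev w).
Proof.
elim: w => [|a w IH] /=; first by rewrite cats0.
move=> h; have := SS_conj1 a (IH h).
by rewrite rev_cons -cats1 /= -!catA.
Qed.


Lemma eq_tw n (u v : tw_word n) : u = v -> tw_eq u v.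
Proof. by move=> ->; apply: tw_refl. Qed.

Definition rep p (q : st) : seq 'I_p.+1 := map (o p) (filter q (iota 0 p.+1)).

Lemma all_far_rep p q l (a : 'I_p.+1) : (forall x, x \in l -> far (o p x) a) ->
  all (fun y => far y a) (map (o p) (filter q l)).
Proof.
move=> H; apply/allP => y /mapP [x]; rewrite mem_filter => /andP [_ hx] ->; exact: H.
Qed.

Lemma Blem p q (i : nat) : i <= p ->
  tw_eq (n:=p.+2) (map (o p) (filter q (iota i.+1 (p - i))) ++ [:: o p i] ++
                   rev (map (o p) (filter q (iota i.+1 (p - i)))))
        (if (i < p) && q i.+1 then [:: o p i.+1; o p i; o p i.+1] else [:: o p i]).
Proof.
move=> hi; case: (ltnP i p) => hip /=; last first.
  have -> : p - i = 0 by lia. exact: tw_refl.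
have -> : p - i = (p - i.+1).+1 by lia.
rewrite /= .
set B := map (o p) (filter q (iota i.+2 (p - i.+1))).
have hB : all (fun i0 => all (fun y => far y i0) B) [:: o p i].
  rewrite /= andbT; apply: all_far_rep => x; rewrite mem_iota => hx.
  rewrite /far !oK; lia.
case: (q i.+1) => /=.
  rewrite rev_cons -cats1.
  have := tw_congr (n:=p.+2) [:: o p i.+1] [:: o p i.+1] (tw_conj (n:=p.+2) hB).
  by rewrite /= -!catA.
exact: (tw_conj (n:=p.+2) hB).
Qed.

Lemma rep_split p q i : i <= p ->
  rep p q = map (o p) (filter q (iota 0 i)) ++ (if q i then [:: o p i] else [::]) ++
            map (o p) (filter q (iota i.+1 (p - i))).
Proof.
move=> hi; rewrite /rep.
rewrite (_ : iota 0 p.+1 = iota 0 (i + (p - i).+1)); last by congr iota; lia.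
rewrite iotaD filter_cat map_cat add0n /=.
by case: (q i).
Qed.

Lemma filter_flip q (a : nat) l : a \notin l -> filter (flip q a) l = filter q l.
Proof.
move=> h; apply: eq_in_filter => x hx; rewrite /flip.
have -> : (x == a) = false by apply/eqP => E; rewrite -E hx in h.
by rewrite addbF.
Qed.

Lemma sch' p q i : i <= p -> SS p (rep p q ++ o p i :: rev (rep p (flip q i))).
Proof.
move=> hi.
rewrite (rep_split q hi) (rep_split (flip q i) hi).
rewrite !filter_flip; first last.
- by rewrite mem_iota; lia.
- by rewrite mem_iota; lia.
have -> : flip q i i = ~~ q i by rewrite /flip eqxx addbT.
set A := map (o p) (filter q (iota 0 i)).
set B := map (o p) (filter q (iota i.+1 (p - i))).
have HB := Blem q hi. rewrite -/B in HB.
case: (q i) => /=.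
-
  apply: (SS_eq (u := A ++ ((o p i :: (B ++ [:: o p i] ++ rev B))) ++ rev A)).
    by apply: eq_tw; rewrite rev_cat /= -!catA /=.
  apply: (SS_eq (u := A ++ (o p i :: if (i < p) && q i.+1 then [:: o p i.+1; o p i; o p i.+1] else [:: o p i]) ++ rev A)).
    exact: tw_sym (tw_congr (n:=p.+2) A (rev A) (tw_congrL (n:=p.+2) [:: o p i] HB)).
  apply: SS_conjw.
  case: ifP => h /=.
    exists [:: (false, i)]; split; first by rewrite /vld /= andbT; lia.
    rewrite /expand /ge /= cats0 gen_x; last lia. exact: tw_refl.
  apply: (SS_eq (u := [::])); last exact: SS_nil.
  exact: tw_sym (tw_sq (n:=p.+2) [::] [::] (o p i)).
- apply: (SS_eq (u := A ++ ((B ++ [:: o p i] ++ rev B) ++ [:: o p i]) ++ rev A)).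
    by apply: eq_tw; rewrite !rev_cat /= -!catA /= rev_cons -cats1 -catA.
  apply: (SS_eq (u := A ++ ((if (i < p) && q i.+1 then [:: o p i.+1; o p i; o p i.+1] else [:: o p i]) ++ [:: o p i]) ++ rev A)).
    exact: tw_sym (tw_congr (n:=p.+2) A (rev A) (tw_congrR (n:=p.+2) [:: o p i] HB)).
  apply: SS_conjw.
  case: ifP => h /=.
    exists [:: (true, i)]; split; first by rewrite /vld /= andbT; lia.
    rewrite /expand /ge /= cats0 gen_x; last lia. exact: tw_refl.
  apply: (SS_eq (u := [::])); last exact: SS_nil.
  exact: tw_sym (tw_sq (n:=p.+2) [::] [::] (o p i)).
Qed.

Lemma sch p q (a : 'I_p.+1) : SS p (rep p q ++ a :: rev (rep p (flip q a))).
Proof.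
have hi : nat_of_ord a <= p by rewrite -ltnS ltn_ord.
by have := sch' q hi; rewrite /o inord_val.
Qed.


Local Open Scope ring_scope.

Lemma Kdec p (u : seq 'I_p.+1) : SS p (u ++ rev (rep p (par q0 u))).
Proof.
elim/last_ind: u => [|u a IH].
  rewrite /= /rep (_ : filter q0 _ = [::]) /=; first exact: SS_nil.
  by rewrite -(filter_pred0 (iota 0 p.+1)).
rewrite -cats1 par_cat /=.
set q := par q0 u.
apply: (SS_eq (u := (u ++ rev (rep p q)) ++ (rep p q ++ a :: rev (rep p (flip q a))))); last first.
  exact: SS_cat IH (sch q a).
have := tw_congr (n:=p.+2) u (a :: rev (rep p (flip q a))) (tw_cancel' (n:=p.+2) (rep p q)).
by rewrite /= -!catA.
Qed.

Lemma TW'_SS p (u : seq 'I_p.+1) : @TW' p.+2 u -> SS p u.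
Proof.
move=> h; have := Kdec u; rewrite par0; last exact: derived_even h.
rewrite /rep (_ : filter q0 _ = [::]) /= ?cats0 //.
by rewrite -(filter_pred0 (iota 0 p.+1)).
Qed.

Lemma cntz_out p s c : vld p s -> (2 * p - 1 <= c)%N -> cntz s c = 0.
Proof.
elim: s => [|[b c'] s IH] //= /andP [h1 h2] hc.
rewrite IH //; have -> : (c' == c) = false by apply/eqP => E; subst; lia.
by rewrite addr0.
Qed.

Lemma kernel p (u : seq 'I_p.+1) : @TW' p.+2 u ->
  (forall c, (c < 2 * p - 1)%N -> f0 p u c = 0) -> @TW'' p.+2 u.
Proof.
move=> hu hf; have [s [hv e]] := TW'_SS hu.
apply: der_eq (tw_sym e).
apply: cnt0 (leqnn _) _ => c.
case: (ltnP c (2 * p - 1)) => hc; last exact: (cntz_out hv hc).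
by rewrite -(f_expand c hv) -(f_inv p c e) hf.
Qed.

Lemma cntz_nseq n b c c' : cntz (nseq n (b, c)) c' = if c == c' then n%:Z * sgn b else 0.
Proof.
elim: n => [|n IH] /=; first by case: ifP; rewrite ?mul0r.
rewrite IH; case: ifP => _; last by rewrite addr0.
by rewrite intS mulrDl mul1r.
Qed.

Definition zs (z : int) (c : nat) := nseq (absz z) (z < 0, c).

Lemma cntz_zs z c c' : cntz (zs z c) c' = if c == c' then z else 0.
Proof.
rewrite /zs cntz_nseq; case: ifP => // _.
case: z => n /=; first by rewrite mulr1.
by rewrite NegzE mulrN1.
Qed.

Lemma cntz_flat (z : nat -> int) l c' : uniq l ->
  cntz (flatten [seq zs (z c) c | c <- l]) c' = if c' \in l then z c' else 0.
Proof.
elim: l => [|c l IH] //= /andP [hc hl].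
rewrite cntz_cat IH // cntz_zs in_cons.
case: (c =P c') => [E|ne] /=.
  by subst c'; rewrite eqxx (negbTE hc) addr0.
rewrite add0r; have -> : (c' == c) = false by apply/eqP => E'; apply: ne; rewrite E'.
by [].
Qed.

Local Close Scope ring_scope.

Local Open Scope ring_scope.

Definition fv p (u : tw_word p.+2) : 'rV[int]_(2 * p - 1) := \row_(c < 2 * p - 1) f0 p u c.

Lemma main_iso p : (0 < p)%N -> TW_ab_iso_Zk p.+2 (2 * p - 1).
Proof.
move=> hp; exists (@fv p); split.
- move=> u v _ e; apply/rowP => c; rewrite !mxE; exact: f_inv.
- move=> u v hu _; apply/rowP => c; rewrite !mxE; apply: f_add; exact: derived_even hu.
- move=> x.
  pose z (c : nat) : int := if insub c is Some j then x ord0 j else 0.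
  pose s := flatten [seq zs (z c) c | c <- iota 0 (2 * p - 1)].
  exists (expand p s); first exact: expand_TW'.
  have hv : vld p s.
    apply/allP => e /flattenP [l /mapP [c hc ->]] /nseqP [-> _] /=.
    by move: hc; rewrite mem_iota.
  apply/rowP => c; rewrite !mxE f_expand // cntz_flat ?iota_uniq //.
  rewrite mem_iota /= ltn_ord /z valK. by [].
- move=> u hu; split.
    move=> h0; apply: kernel hu _ => c hc.
    by have := congr1 (fun M : 'rV[int]_(2 * p - 1) => M ord0 (Ordinal hc)) h0; rewrite !mxE.
  move=> h; apply/rowP => c; rewrite !mxE; exact: f_TW'' h.
Qed.

Lemma main_np p : (0 < p)%N -> ~ TW'_perfect p.+2.
Proof.
move=> hp H.
have := f_TW'' p 0 (H _ (gen_TW' p 0)).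
by rewrite f_gen //; lia.
Qed.


Local Close Scope ring_scope.

Theorem corollary1p3 (m : nat) (hm : (1 <= m)%N) :
  TW_ab_iso_Zk (m + 2) (2 * m - 1) /\ ~ TW'_perfect (m + 2).
Proof. rewrite addn2; split; [exact: main_iso | exact: main_np]. Qed.
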